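(* Let $K$ be a field, let $e_1,\dots,e_m$ be a basis of $K^m$, and let $T_1,\dots,T_k:K^m\to K^n$ be linear maps. Suppose that for every $l$ and every choice of distinct indices $i_1,\dots,i_l\in\{1,\dots,m\}$, the span of the vectors $\{T_j(e_{i_t}): 1\le t\le l,\ 1\le j\le k\}$ has dimension at least $l$. Then there exists a function $\phi:\{1,\dots,m\}\to\{1,\dots,k\}$ such that the vectors $T_{\phi(1)}(e_1),T_{\phi(2)}(e_2),\dots,T_{\phi(m)}(e_m)$ are linearly independent. *)

(* Defs.v *)
From HB Require Import structures.
From mathcomp Require Import all_boot all_algebra.
Set Implicit Arguments. Unset Strict Implicit. Unset Printing Implicit Defensive.
Import GRing.Theory.
Local Open Scope ring_scope.

(* Conventions: vectors of K^m are row vectors 'rV[K]_m; a linear map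
   K^m -> K^n is represented by its matrix A : 'M[K]_(m,n), acting by
   v |-> v *m A. *)

Definition is_basis (K : fieldType) (m : nat) (e : 'I_m -> 'rV[K]_m) : bool :=
  row_free (\matrix_(i < m) e i) && row_full (\matrix_(i < m) e i).

Definition span_images (K : fieldType) (m n k : nat)
  (e : 'I_m -> 'rV[K]_m) (T : 'I_k -> 'M[K]_(m, n)) (S : {set 'I_m}) :
  'M[K]_n :=
  (\sum_(i in S) \sum_(j < k) <<e i *m T j>>)%MS.

Definition lin_indep (K : fieldType) (p n : nat) (v : 'I_p -> 'rV[K]_n) : bool :=
  row_free (\matrix_(i < p) v i).

(* Main.v *)
Require Import Defs.
From HB Require Import structures.
From mathcomp Require Import all_boot all_algebra.
From mathcomp Require Import zify.
Import GRing.Theory.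
Local Open Scope ring_scope.

Section Rado.
Variables (K : fieldType) (m n k : nat) (v : 'I_m -> 'I_k -> 'rV[K]_n).

Definition FF (A : 'I_m -> {set 'I_k}) (S : {set 'I_m}) : 'M[K]_n :=
  (\sum_(i in S) \sum_(j in A i) <<v i j>>)%MS.

Definition Hc (A : 'I_m -> {set 'I_k}) := forall S : {set 'I_m}, (#|S| <= \rank (FF A S))%N.

Lemma F_sup (A : 'I_m -> {set 'I_k}) (S : {set 'I_m}) i j : i \in S -> j \in A i -> (v i j <= FF A S)%MS.
Proof.
move=> iS jA; rewrite -genmxE; apply: (sumsmx_sup i) => //.
exact: (sumsmx_sup j).
Qed.

Lemma F_sub (A : 'I_m -> {set 'I_k}) (S : {set 'I_m}) p (X : 'M[K]_(p, n)) :
  (forall i j, i \in S -> j \in A i -> (v i j <= X)%MS) -> (FF A S <= X)%MS.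
Proof.
move=> h; apply/sumsmx_subP => i iS; apply/sumsmx_subP => j jA.
rewrite genmxE; exact: h.
Qed.

Lemma leaf (A : 'I_m -> {set 'I_k}) : Hc A -> (forall i, #|A i| <= 1)%N ->
  exists phi : 'I_m -> 'I_k, (forall i, phi i \in A i) /\
    row_free (\matrix_(i < m) v i (phi i)).
Proof.
move=> hA h1.
have: forall i, exists j, A i = [set j].
  move=> i; apply/cards1P; rewrite eqn_leq h1 /=.
  have := hA [set i]; rewrite cards1 => h.
  rewrite card_gt0; apply/eqP => A0.
  have : (FF A [set i] <= (0 : 'M[K]_n))%MS.
    by apply: F_sub => i' j; rewrite inE => /eqP ->; rewrite A0 inE.
  move/mxrankS; rewrite mxrank0 leqn0 => /eqP r0.
  by rewrite r0 in h.
case/fin_all_exists => phi hphi.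
exists phi; split; first by move=> i; rewrite hphi set11.
rewrite /row_free eqn_leq rank_leq_row /=.
have := hA setT; rewrite cardsT card_ord => h; apply: (leq_trans h).
apply: mxrankS.
apply: F_sub => i j _; rewrite hphi inE => /eqP ->.
have := row_sub i (\matrix_(i0 < m) v i0 (phi i0)); by rewrite rowK.
Qed.

Lemma arith (r1 r2 rU rI s1 s2 su si si' : nat) :
  (r1 < s1)%N -> (r2 < s2)%N -> (su <= rU)%N -> (si' <= rI)%N ->
  si = (1 + si')%N -> (su + si)%N = (s1 + s2)%N -> (rU + rI)%N = (r1 + r2)%N -> False.
Proof. lia. Qed.

Lemma step (A : 'I_m -> {set 'I_k}) i0 : Hc A -> (1 < #|A i0|)%N ->
  exists A' : 'I_m -> {set 'I_k}, (\sum_i #|A' i| < \sum_i #|A i|)%N /\ Hc A' /\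
     (forall i, A' i \subset A i).
Proof.
move=> hA /card_gt1P [x1 [x2 [x1A x2A x12]]].
pose B x := fun i => if i == i0 then A i0 :\ x else A i.
have BA x i : B x i \subset A i.
  rewrite /B; case: eqP => [->|_] //; exact: subsetDl.
have Bsum x : x \in A i0 -> (\sum_i #|B x i| < \sum_i #|A i|)%N.
  move=> xA.
  rewrite (bigD1 i0) //= [X in (_ < X)%N](bigD1 i0) //= /B eqxx.
  rewrite (eq_bigr (fun i => #|A i|)); last by move=> i /negbTE ->.
  rewrite [X in (_ < X + _)%N](cardsD1 x) xA; by rewrite /= -addnA add1n ltnSn.
have inB x i j : j \in A i -> (i != i0) || (j != x) -> j \in B x i.
  move=> jA c; rewrite /B; case: eqP => [ei|//]; subst i.
  by rewrite eqxx /= in c; rewrite !inE c jA.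
case: (boolP [forall S : {set 'I_m}, (#|S| <= \rank (FF (B x1) S))%N]) => [/forallP h1|].
  by exists (B x1); split; [exact: Bsum|split].
move=> /forallPn [S1]; rewrite -ltnNge => hS1.
case: (boolP [forall S : {set 'I_m}, (#|S| <= \rank (FF (B x2) S))%N]) => [/forallP h2|].
  by exists (B x2); split; [exact: Bsum|split].
move=> /forallPn [S2]; rewrite -ltnNge => hS2.
exfalso.
set P1 := FF (B x1) S1; set P2 := FF (B x2) S2.
have h1 i j : i \in S1 -> j \in A i -> (i != i0) || (j != x1) -> (v i j <= P1)%MS.
  move=> iS jA c; apply: F_sup => //; exact: inB.
have h2 i j : i \in S2 -> j \in A i -> (i != i0) || (j != x2) -> (v i j <= P2)%MS.
  move=> iS jA c; apply: F_sup => //; exact: inB.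
have i0S x S : x \in A i0 -> (\rank (FF (B x) S) < #|S|)%N -> i0 \in S.
  move=> xA hS; apply/negPn/negP => ni.
  have : (FF A S <= FF (B x) S)%MS.
    apply: F_sub => i j iS jA; apply: F_sup => //.
    apply: inB => //; apply/orP; left.
    by apply/eqP => e; rewrite -e iS in ni.
  move/mxrankS => r; have := hA S; lia.
have i0S1 := i0S _ _ x1A hS1.
have i0S2 := i0S _ _ x2A hS2.
have hU : (FF A (S1 :|: S2) <= P1 + P2)%MS.
  apply: F_sub => i j; rewrite inE => /orP [iS|iS] jA.
  - case: (eqVneq i i0) => [ei|ni].
      subst i; case: (eqVneq j x1) => [ej|nj].
        subst j; apply: submx_trans (addsmxSr _ _); apply: h2 => //.
        by rewrite x12 orbT.
      by apply: submx_trans (addsmxSl _ _); apply: h1 => //; rewrite nj orbT.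
    by apply: submx_trans (addsmxSl _ _); apply: h1 => //; rewrite ni.
  - case: (eqVneq i i0) => [ei|ni].
      subst i; case: (eqVneq j x1) => [ej|nj].
        subst j; apply: submx_trans (addsmxSr _ _); apply: h2 => //.
        by rewrite x12 orbT.
      by apply: submx_trans (addsmxSl _ _); apply: h1 => //; rewrite nj orbT.
    by apply: submx_trans (addsmxSr _ _); apply: h2 => //; rewrite ni.
have hI : (FF A (S1 :&: S2 :\ i0) <= P1 :&: P2)%MS.
  apply: F_sub => i j; rewrite !inE => /and3P [ni iS1 iS2] jA.
  by rewrite sub_capmx h1 ?ni // h2 ?ni.
have rU := leq_trans (hA _) (mxrankS hU).
have rI := leq_trans (hA _) (mxrankS hI).
have := mxrank_sum_cap P1 P2.
have := cardsUI S1 S2.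
have := cardsD1 i0 (S1 :&: S2); rewrite inE i0S1 i0S2 /=.
have hS1p : (\rank P1 < #|S1|)%N := hS1.
have hS2p : (\rank P2 < #|S2|)%N := hS2.
move=> e1 e2 e3.
exact: (@arith _ _ _ _ _ _ _ _ _ hS1p hS2p rU rI e1 e2 e3).
Qed.

Lemma main N (A : 'I_m -> {set 'I_k}) : (\sum_i #|A i| <= N)%N -> Hc A ->
  exists phi : 'I_m -> 'I_k, (forall i, phi i \in A i) /\
    row_free (\matrix_(i < m) v i (phi i)).
Proof.
elim: N A => [|N IH] A hs hA.
  apply: leaf => // i; apply: leq_trans _ (leq_trans hs _) => //.
  by rewrite (bigD1 i) //=; apply: leq_addr.
case: (boolP [exists i, (1 < #|A i|)%N]) => [/existsP [i0 hi0]|hn].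
  have [A' [hs' [hA' sA]]] := @step A i0 hA hi0.
  have hs'' : (\sum_i #|A' i| <= N)%N by rewrite -ltnS; exact: leq_trans hs' hs.
  have [phi [hphi hf]] := IH A' hs'' hA'.
  by exists phi; split => // i; exact: (subsetP (sA i)).
apply: leaf => // i; rewrite leqNgt; apply/negP => h.
by move/existsP: hn; apply; exists i.
Qed.

End Rado.

Theorem lemma5 (K : fieldType) (m n k : nat)
  (e : 'I_m -> 'rV[K]_m) (T : 'I_k -> 'M[K]_(m, n))
  (he : is_basis e)
  (hT : forall S : {set 'I_m}, (#|S| <= \rank (span_images e T S))%N) :
  exists phi : 'I_m -> 'I_k, lin_indep (fun i : 'I_m => e i *m T (phi i)).
Proof.
pose v i j := e i *m T j.
pose A0 := fun _ : 'I_m => [set: 'I_k].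
have hA : @Hc K m n k v A0.
  move=> S; have := hT S.
  suff -> : span_images e T S = @FF K m n k v A0 S by [].
  rewrite /span_images /FF; apply: eq_bigr => i _.
  by apply: eq_bigl => j; rewrite in_setT.
have [phi [_ hf]] := @main K m n k v _ A0 (leqnn _) hA.
by exists phi.
Qed.
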